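(* For every conjunctive query $q$: (a) if $q_1,\dots,q_c$ are the connected components of $q$, then $\chi(q)=\sum_{i=1}^c\chi(q_i)$; (b) for any $M\subseteq\mathrm{atoms}(q)$, $\chi(q/M)=\chi(q)-\chi(M)$; (c) $\chi(q)\le 0$; (d) for any $M\subseteq\mathrm{atoms}(q)$, $\chi(q)\le\chi(q/M)$.
   Context: A conjunctive query $q=S_1(\bar x_1),\dots,S_\ell(\bar x_\ell)$ consists of atoms over distinct relation symbols, $S_j$ having arity $a_j$ (number of argument positions; variables may repeat within an atom). Its hypergraph has the variables as vertices and a hyperedge $\mathrm{vars}(S_j)$ per atom; connected components are the maximal connected subqueries. The characteristic is $\chi(q)=k+\ell-\sum_j a_j-c$, where $k$ is the number of distinct variables, $\ell$ the number of atoms and $c$ the number of connected components. For a set $M$ of atoms, $\chi(M)$ is the characteristic of the query consisting of the atoms in $M$. The contraction $q/M$ is obtained by, for each connected component of (the hypergraph of) $M$, identifying all its variables into a single variable, and deleting the atoms of $M$; the remaining atoms keep their arities. E.g. for $L_5=S_1(x_0,x_1),\dots,S_5(x_4,x_5)$, $L_5/\{S_2,S_4\}=S_1(x_0,x_1),S_3(x_1,x_3),S_5(x_3,x_5)$. *)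

(* Defs.v *)
From mathcomp Require Import all_boot all_order all_algebra.
Unset Printing Implicit Defensive.

(* Variables are natural numbers; an atom S_j(x_1,...,x_a) is represented by
   its argument list (a seq of variables, repetitions allowed; its arity is the
   length).  Relation symbols are pairwise distinct, so atoms are identified by
   their position in the query: a conjunctive query is a seq of atoms. *)
Definition atom := seq nat.
Definition query := seq atom.

Definition atom_at (q : query) (i : 'I_(size q)) : atom := nth [::] q i.

Definition atom_adj (q : query) : rel 'I_(size q) :=
  fun i j => has (fun x => x \in atom_at q j) (atom_at q i).

Definition qvars (q : query) : seq nat := undup (flatten q).
Definition nvars (q : query) : nat := size (qvars q).
Definition sum_arity (q : query) : nat := sumn (map size q).

(* number of connected components of the hypergraph; since every variable
   occurs in an atom, components are counted through their atoms *)
Definition ncomp (q : query) : nat := n_comp (atom_adj q) 'I_(size q).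

Definition chi (q : query) : int :=
  (nvars q + size q)%:Z - (sum_arity q + ncomp q)%:Z.

Definition subquery (q : query) (M : {set 'I_(size q)}) : query :=
  [seq atom_at q i | i <- enum 'I_(size q) & i \in M].

Definition vconn (q' : query) (x y : nat) : bool :=
  [exists i : 'I_(size q'), exists j : 'I_(size q'),
     [&& x \in atom_at q' i, y \in atom_at q' j & connect (atom_adj q') i j]].

(* representative of x after identifying the variables of each component of
   q': the least variable of its component (x itself if x is not a variable
   of q') *)
Definition rep (q' : query) (x : nat) : nat :=
  head x (sort leq [seq y <- qvars q' | vconn q' x y]).

Definition contract (q : query) (M : {set 'I_(size q)}) : query :=
  [seq map (rep (subquery q M)) (atom_at q i) | i <- enum 'I_(size q) & i \notin M].

Definition component (q : query) (r : 'I_(size q)) : query :=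
  subquery q [set i | connect (atom_adj q) r i].

(* Main.v *)
Require Import Defs.
Set Warnings "-notation-overridden,-ambiguous-paths".
From mathcomp Require Import all_boot all_order all_algebra.
From mathcomp Require Import zify.
Import Order.TTheory GRing.Theory Num.Theory.

Lemma connect_closedP (T : finType) (e : rel T) x y :
  reflect (forall S : {set T}, (forall u v, u \in S -> e u v -> v \in S) -> x \in S -> y \in S)
          (connect e x y).
Proof.
apply: (iffP idP).
- move=> /connectP [p pth ->] S HS; elim: p x pth => //= z p IH x /andP[exz pz] xS.
  exact: IH pz (HS _ _ xS exz).
- move=> H; have := H [set z | connect e x z]; rewrite !inE; apply => //.
  move=> u v; rewrite !inE => xu euv; exact: connect_trans xu (connect1 euv).
Qed.

Lemma connect_homo (T U : finType) (e : rel T) (e' : rel U) (h : T -> U) :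
  (forall x y, e x y -> e' (h x) (h y)) ->
  forall x y, connect e x y -> connect e' (h x) (h y).
Proof.
move=> He x y /connectP [p pth ->]; elim: p x pth => //= z p IH x /andP[exz pz].
exact: connect_trans (connect1 (He _ _ exz)) (IH _ pz).
Qed.

Lemma connect_pull (T U : finType) (e : rel T) (e' : rel U) (h : T -> U) :
  injective h -> (forall x y, e' (h x) (h y) -> e x y) ->
  (forall u v, e' u v -> exists y, v = h y) ->
  forall x y, connect e' (h x) (h y) -> connect e x y.
Proof.
move=> hinj He Him x y /connectP [p pth].
elim: p x pth => /= [x _ /hinj -> //| v p IH x /andP[exv pv] hl].
have [z vz] := Him _ _ exv; subst v.
exact: connect_trans (connect1 (He _ _ exv)) (IH _ pv hl).
Qed.

Lemma n_comp_label (T U : finType) (e : rel T) (a : {set T}) (g : T -> U) :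
  connect_sym e -> (forall x y, x \in a -> connect e x y -> y \in a) ->
  {in a &, forall x y, (g x == g y) = connect e x y} -> n_comp e a = #|g @: a|.
Proof.
move=> sym cl lab.
have ra x : x \in a -> fingraph.root e x \in a by move=> xa; exact: cl _ _ xa (connect_root _ _).
have gr x : x \in a -> g (fingraph.root e x) = g x.
  move=> xa; apply/eqP; rewrite lab ?ra // sym; exact: connect_root.
rewrite /n_comp_mem.
have -> : g @: a = g @: [set x | fingraph.roots e x && (x \in a)].
  apply/setP => u; apply/imsetP/imsetP => [[x xa ->]|[x]].
    by exists (fingraph.root e x); rewrite ?inE ?roots_root ?ra ?gr.
  by rewrite inE => /andP[_ xa] ->; exists x.
rewrite card_in_imset.
  by apply: eq_card => x; rewrite !inE.
move=> x y; rewrite !inE => /andP[rx xa] /andP[ry ya] /eqP.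
by rewrite lab // -(root_connect sym) => /eqP; rewrite (eqP rx) (eqP ry).
Qed.

Set Implicit Arguments. Unset Strict Implicit.

Definition adjF (I : finType) (f : I -> seq nat) : rel I :=
  fun i j => has (fun x => x \in f j) (f i).
Definition adjR (I : finType) (f : I -> seq nat) (A : {set I}) : rel I :=
  fun i j => [&& i \in A, j \in A & adjF f i j].
Definition VS (S : nat) (I : finType) (f : I -> seq nat) (A : {set I}) : {set 'I_S.+1} :=
  [set x : 'I_S.+1 | [exists i in A, val x \in f i]].
Definition chiS S (I : finType) (f : I -> seq nat) (A : {set I}) : int :=
  (#|VS S f A| + #|A|)%:Z - (\sum_(i in A) size (f i) + n_comp (adjR f A) A)%:Z.
Definition inV (I : finType) (f : I -> seq nat) (A : {set I}) (x : nat) : bool :=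
  [exists i in A, x \in f i].
Definition vconnS (I : finType) (f : I -> seq nat) (A : {set I}) (x y : nat) : bool :=
  [exists i, exists j, [&& i \in A, j \in A, x \in f i, y \in f j & connect (adjR f A) i j]].

Lemma adjFP (I : finType) (f : I -> seq nat) i j :
  reflect (exists x, x \in f i /\ x \in f j) (adjF f i j).
Proof. by apply: (iffP hasP) => [[x]|[x []]]; exists x. Qed.

Lemma adjF_sym (I : finType) (f : I -> seq nat) : symmetric (adjF f).
Proof. by move=> i j; apply/adjFP/adjFP => -[x []]; exists x. Qed.

Lemma adjF_csym (I : finType) (f : I -> seq nat) : connect_sym (adjF f).
Proof. exact: sym_connect_sym (@adjF_sym I f). Qed.

Lemma adjR_sym (I : finType) (f : I -> seq nat) (A : {set I}) : symmetric (adjR f A).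
Proof. by move=> i j; rewrite /adjR adjF_sym; case: (i \in A); case: (j \in A). Qed.

Lemma adjR_csym (I : finType) (f : I -> seq nat) (A : {set I}) : connect_sym (adjR f A).
Proof. exact: sym_connect_sym (@adjR_sym I f A). Qed.

Lemma adjR_in (I : finType) (f : I -> seq nat) (A : {set I}) x y :
  x \in A -> connect (adjR f A) x y -> y \in A.
Proof. by move=> xA /connect_closedP; apply => // u v _ /and3P[]. Qed.

Lemma connect_RF (I : finType) (f : I -> seq nat) (A : {set I}) x y :
  connect (adjR f A) x y -> connect (adjF f) x y.
Proof. by apply: connect_sub => u v /and3P[_ _ h]; apply: connect1. Qed.

Lemma connect_mono (I : finType) (f : I -> seq nat) (A B : {set I}) x y :
  A \subset B -> connect (adjR f A) x y -> connect (adjR f B) x y.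
Proof.
move=> AB; apply: connect_sub => u v /and3P[uA vA h]; apply: connect1.
by rewrite /adjR (subsetP AB _ uA) (subsetP AB _ vA).
Qed.

Lemma connect_restrict (I : finType) (f : I -> seq nat) (C : {set I}) x y :
  (forall u v, u \in C -> adjF f u v -> v \in C) -> x \in C ->
  connect (adjF f) x y -> connect (adjR f C) x y.
Proof.
move=> HC xC cxy; apply/connect_closedP => S HS xS.
have yC : y \in C by move/connect_closedP: cxy; apply.
have : y \in (S :&: C) :|: ~: C.
  move/connect_closedP: cxy; apply; last by rewrite !inE xS xC.
  move=> u v; rewrite !inE => /orP[/andP[uS uC]|uC] huv.
  - have vC := HC _ _ uC huv; by rewrite vC (HS u v) // /adjR uC vC.
  - apply/orP; right; apply/negP => vC; move/negP: uC; apply; apply: HC vC _.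
    by rewrite adjF_sym.
by rewrite !inE yC /= andbT orbF.
Qed.

Lemma card_vals S (t : seq nat) : (forall x, x \in t -> x <= S) ->
  #|[set x : 'I_S.+1 | val x \in t]| = size (undup t).
Proof.
move=> Ht.
set t' := [seq (inord x : 'I_S.+1) | x <- undup t].
have ut' : uniq t'.
  rewrite map_inj_in_uniq ?undup_uniq // => x y; rewrite !mem_undup => xt yt /(congr1 (@nat_of_ord _)).
  by rewrite !inordK // ltnS Ht.
rewrite -(size_map (fun x => inord x : 'I_S.+1)) -/t' -(card_uniqP ut').
apply: eq_card => z; rewrite inE; apply/idP/mapP => [zt|[x]].
  by exists (val z); rewrite ?mem_undup // inord_val.
by rewrite mem_undup => xt ->; have -> : val (inord x : 'I_S.+1) = x by apply: inordK; rewrite ltnS Ht.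
Qed.

Lemma leq_sumn_mem (s : seq nat) x : x \in s -> x <= sumn s.
Proof. by elim: s => //= y s IH; rewrite inE => /orP[/eqP->|/IH]; lia. Qed.

Lemma bridge S (I : finType) (f : I -> seq nat) (s : seq I) :
  uniq s -> (forall i x, i \in s -> x \in f i -> x <= S) ->
  [/\ chi (map f s) = chiS S f [set i | i \in s],
      (forall x y, vconn (map f s) x y = vconnS f [set i | i \in s] x y) &
      (forall x, (x \in qvars (map f s)) = inV f [set i | i \in s] x)].
Proof.
move=> us Hb.
set q := map f s; set A := [set i | i \in s].
pose h (j : 'I_(size q)) : I := tnth (in_tuple s) (cast_ord (size_map f s) j).
have hE j x0 : h j = nth x0 s j by rewrite /h (tnth_nth x0).
have jlt (j : 'I_(size q)) : j < size s by rewrite -(size_map f) ltn_ord.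
have H1 j : atom_at q j = f (h j).
  by rewrite /atom_at /q (nth_map (h j)) ?jlt // -hE.
have hA j : h j \in A by rewrite inE (hE _ (h j)) mem_nth ?jlt.
have hinj : injective h.
  move=> j k; rewrite (hE j (h j)) (hE k (h j)) => /eqP.
  by rewrite nth_uniq ?jlt // => /eqP/val_inj.
have hsurj i : i \in A -> exists j, i = h j.
  rewrite inE => iS.
  have lt : index i s < size q by rewrite size_map index_mem.
  by exists (Ordinal lt); rewrite (hE _ i) nth_index.
have adjE j k : atom_adj q j k = adjR f A (h j) (h k).
  by rewrite /atom_adj /adjR !hA !H1.
have CONN j k : connect (atom_adj q) j k = connect (adjR f A) (h j) (h k).
  apply/idP/idP.
  - by apply: connect_homo => u v; rewrite adjE.
  - apply: connect_pull => // [u v|u v /and3P[_ vA _]]; first by rewrite adjE.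
    exact: hsurj.
have inVE x : (x \in qvars q) = inV f A x.
  rewrite /qvars mem_undup; apply/flatten_mapP/existsP => [[i iS xi]|[i /andP[iA xi]]].
    by exists i; rewrite inE iS.
  by exists i => //; move: iA; rewrite inE.
split.
- rewrite /chi /chiS /nvars.
  have -> : size (qvars q) = #|VS S f A|.
    rewrite /qvars -(@card_vals S); last first.
      by move=> x /flatten_mapP [i iS xi]; apply: (Hb i).
    by apply: eq_card => z; rewrite !inE -mem_undup -/(qvars q) inVE.
  have -> : size q = #|A|.
    by rewrite size_map -(card_uniqP us); apply: eq_card => i; rewrite inE.
  have -> : sum_arity q = \sum_(i in A) size (f i).
    rewrite /sum_arity /q sumnE !big_map big_uniq //.
    by apply: eq_bigl => i; rewrite inE.
  have -> : ncomp q = n_comp (adjR f A) A; last by [].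
  rewrite /ncomp (@eq_n_comp_r _ _ _ [set: 'I_(size q)]); last by move=> j; rewrite in_setT.
  rewrite (@n_comp_label _ _ _ _ (fun j => fingraph.root (adjR f A) (h j))).
  + rewrite (@n_comp_label _ _ _ _ (fingraph.root (adjR f A))).
    * rewrite (imset_comp (fingraph.root (adjR f A)) h).
      have -> : [set h x | x in [set: 'I_(size q)]] = A; last by [].
      apply/setP => i; apply/imsetP/idP => [[j _ ->]|/hsurj [j ->]]; first exact: hA.
      by exists j.
    * exact: adjR_csym.
    * exact: adjR_in.
    * by move=> x y _ _; rewrite root_connect //; apply: adjR_csym.
  + exact: (@adjF_csym _ (atom_at q)).
  + by move=> x y; rewrite !inE.
  + by move=> x y _ _; rewrite root_connect ?CONN //; apply: adjR_csym.
- move=> x y; apply/existsP/existsP => [[j /existsP [k]]|[i /existsP [j]]].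
    rewrite !H1 CONN => /and3P[xj yk cjk].
    by exists (h j); apply/existsP; exists (h k); rewrite !hA xj yk cjk.
  case/and5P => iA jA xi yj cij.
  have [i' ?] := hsurj _ iA; have [j' ?] := hsurj _ jA; subst i j.
  by exists i'; apply/existsP; exists j'; rewrite !H1 CONN xi yj cij.
- exact: inVE.
Qed.

Lemma vconnS_in (I : finType) (f : I -> seq nat) (A : {set I}) x y :
  vconnS f A x y -> inV f A x && inV f A y.
Proof.
case/existsP=> i /existsP [j] /and5P[iA jA xi yj _].
by apply/andP; split; apply/existsP; [exists i | exists j]; apply/andP.
Qed.

Lemma vconnS_refl (I : finType) (f : I -> seq nat) (A : {set I}) x :
  inV f A x -> vconnS f A x x.
Proof.
case/existsP=> i /andP[iA xi]; apply/existsP; exists i; apply/existsP; exists i.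
by rewrite iA xi connect0.
Qed.

Lemma vconnS_sym (I : finType) (f : I -> seq nat) (A : {set I}) x y :
  vconnS f A x y -> vconnS f A y x.
Proof.
case/existsP=> i /existsP [j] /and5P[iA jA xi yj cij].
apply/existsP; exists j; apply/existsP; exists i.
by rewrite iA jA xi yj adjR_csym.
Qed.

Lemma vconnS_trans (I : finType) (f : I -> seq nat) (A : {set I}) x y z :
  vconnS f A x y -> vconnS f A y z -> vconnS f A x z.
Proof.
case/existsP=> i /existsP [j] /and5P[iA jA xi yj cij].
case/existsP=> j' /existsP [k] /and5P[j'A kA yj' zk cjk].
apply/existsP; exists i; apply/existsP; exists k; rewrite iA kA xi zk /=.
apply: connect_trans cij (connect_trans _ cjk); apply: connect1.
by rewrite /adjR jA j'A; apply/adjFP; exists y.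
Qed.

Lemma rep_props S (I : finType) (f : I -> seq nat) (s : seq I) :
  uniq s -> (forall i x, i \in s -> x \in f i -> x <= S) ->
  [/\ forall x, ~~ inV f [set i | i \in s] x -> rep (map f s) x = x,
      forall x, inV f [set i | i \in s] x ->
         inV f [set i | i \in s] (rep (map f s) x) /\
         vconnS f [set i | i \in s] x (rep (map f s) x) &
      forall x y, inV f [set i | i \in s] x -> inV f [set i | i \in s] y ->
         (rep (map f s) x == rep (map f s) y) = vconnS f [set i | i \in s] x y].
Proof.
move=> us Hb; have [_ VC QV] := bridge us Hb.
set A := [set i | i \in s]; set q := map f s.
have Lx x : inV f A x -> rep q x \in [seq y <- qvars q | vconn q x y].
  move=> xV; rewrite /rep.
  have xL : x \in [seq y <- qvars q | vconn q x y].
    by rewrite mem_filter VC vconnS_refl // QV.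
  case E: (sort leq _) => [|y l] /=.
    by move: xL; rewrite -(mem_sort leq) E.
  by rewrite -(mem_sort leq) E mem_head.
have R2 x : inV f A x -> inV f A (rep q x) /\ vconnS f A x (rep q x).
  by move=> xV; have := Lx x xV; rewrite mem_filter VC QV => /andP[].
split.
- move=> x xV; rewrite /rep.
  have -> : [seq y <- qvars q | vconn q x y] = [::]; last by [].
  rewrite (@eq_filter _ _ pred0) ?filter_pred0 // => y /=.
  by rewrite VC; apply/negbTE/negP => /vconnS_in /andP[xV' _]; move/negP: xV.
- exact: R2.
- move=> x y xV yV; apply/eqP/idP => [E|cxy].
    have [_ cx] := R2 x xV; have [_ cy] := R2 y yV.
    by apply: vconnS_trans cx _; rewrite E; apply: vconnS_sym.
  have EL : [seq z <- qvars q | vconn q x z] = [seq z <- qvars q | vconn q y z].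
    apply: eq_filter => z; rewrite !VC; apply/idP/idP => h.
      by apply: vconnS_trans h; apply: vconnS_sym.
    exact: vconnS_trans h.
  have := Lx x xV; rewrite /rep EL.
  case E: (sort leq _) => [|w l] //=.
  by rewrite -(mem_sort leq) E.
Qed.

Lemma key1 (I : finType) (f : I -> seq nat) (M : {set I}) (r : nat -> nat) :
  (forall x, ~~ inV f M x -> r x = x) ->
  (forall x, inV f M x -> inV f M (r x)) ->
  (forall x y, inV f M x -> inV f M y -> (r x == r y) = vconnS f M x y) ->
  forall i j, i \in ~: M -> j \in ~: M ->
  connect (adjF f) i j = connect (adjR (fun k => map r (f k)) (~: M)) i j.
Proof.
move=> R1 R2 R3 i j iN jN; set g := fun k => map r (f k).
have inVI x u : u \in M -> x \in f u -> inV f M x.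
  by move=> uM xu; apply/existsP; exists u; rewrite uM.
apply/idP/idP => [cij|].
- apply/connect_closedP => Sx HS iS.
  pose W y := [exists s, [&& s \in Sx, s \in ~: M & y \in g s]].
  pose St := [set u | (u \in Sx) && (u \in ~: M) || (u \in M) && has (fun x => W (r x)) (f u)].
  have : j \in St.
    move/connect_closedP: cij; apply; last by rewrite inE iS iN.
    move=> u v; rewrite !inE => Hu /adjFP [x [xu xv]].
    have Wx : W (r x).
      case/orP: Hu => [/andP[uS uN]|/andP[uM /hasP [x' x'u Wx']]].
        by apply/existsP; exists u; rewrite uS inE uN /g map_f.
      have -> : r x = r x' by apply/eqP; rewrite R3 ?(inVI _ u) //;
        apply/existsP; exists u; apply/existsP; exists u; rewrite uM xu x'u connect0.
      exact: Wx'.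
    case: (boolP (v \in M)) => vM /=.
      by rewrite andbF /=; apply/hasP; exists x.
    have vN : v \in ~: M by rewrite inE.
    rewrite andbT orbF.
    case/existsP: Wx => s0 /and3P[s0S s0N rxs0]; rewrite (HS s0 v) //.
    by rewrite /adjR s0N vN; apply/adjFP; exists (r x); rewrite rxs0 /g map_f.
  rewrite inE => /orP[/andP[]//|/andP[jM _]].
  by move: jN; rewrite inE jM.
- apply: connect_sub => u v /and3P[uN vN /adjFP [y [/mapP [x xu ->] /mapP[x' x'v E]]]].
  case: (boolP (inV f M x)) => xV.
  + have x'V : inV f M x'.
      case: (boolP (inV f M x')) => // nx'; move: (R2 _ xV); rewrite E (R1 _ nx').
      by rewrite (negbTE nx').
    move: (R3 _ _ xV x'V); rewrite E eqxx => /esym/existsP [m /existsP [m']].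
    case/and5P => mM m'M xm x'm' cmm'.
    apply: connect_trans (connect1 _) (connect_trans (connect_RF cmm') (connect1 _)).
      by apply/adjFP; exists x.
    by apply/adjFP; exists x'.
  + have ex : x = x'.
      rewrite -(R1 x xV) E; apply: (R1); apply/negP => x'V.
      by move: (R2 _ x'V); rewrite -E (R1 _ xV) (negbTE xV).
    by subst x'; apply: connect1; apply/adjFP; exists x.
Qed.

Lemma card_disjU (T : finType) (A B : {set T}) :
  A :&: B = set0 -> #|A :|: B| = #|A| + #|B|.
Proof. by move=> h; have := cardsU A B; rewrite h cards0 subn0. Qed.

Lemma card_UD (T : finType) (A B : {set T}) : #|A :|: B| = #|A| + #|B :\: A|.
Proof.
have -> : A :|: B = A :|: (B :\: A).
  by apply/setP => x; rewrite !inE; case: (x \in A); case: (x \in B).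
apply: card_disjU; apply/setP => x; rewrite !inE.
by case: (x \in A); rewrite ?andbF.
Qed.

Lemma inord_eq S a b : a <= S -> b <= S ->
  ((inord a : 'I_S.+1) == inord b) = (a == b).
Proof.
move=> aS bS; apply/eqP/eqP => [/(congr1 (@nat_of_ord _))|->//].
by rewrite !inordK.
Qed.

Lemma inV_VS S (I : finType) (f : I -> seq nat) (A : {set I}) (z : 'I_S.+1) :
  (z \in VS S f A) = inV f A (val z).
Proof. by rewrite inE. Qed.

Lemma nil_no_connect (I : finType) (f : I -> seq nat) m j :
  f m = [::] -> connect (adjF f) m j -> j = m.
Proof.
move=> fm /connect_closedP H; apply/set1P; apply: H; last by rewrite inE.
by move=> u v /set1P -> /adjFP [x []]; rewrite fm.
Qed.

Lemma core_contract S (I : finType) (f : I -> seq nat) (M : {set I}) (r : nat -> nat) :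
  (forall i x, x \in f i -> x <= S) ->
  (forall x, ~~ inV f M x -> r x = x) ->
  (forall x, inV f M x -> inV f M (r x)) ->
  (forall x y, inV f M x -> inV f M y -> (r x == r y) = vconnS f M x y) ->
  chiS S (fun i => map r (f i)) (~: M) = (chiS S f setT - chiS S f M)%R.
Proof.
move=> Hb R1 R2 R3.
set g := fun i => map r (f i); set N := ~: M.
have inVI x u (A : {set I}) : u \in A -> x \in f u -> inV f A x.
  by move=> uM xu; apply/existsP; exists u; rewrite uM.
have rS x : x <= S -> r x <= S.
  move=> xS; case: (boolP (inV f M x)) => xV; last by rewrite R1.
  by case/existsP: (R2 _ xV) => i /andP[_ /Hb].
pose rB (z : 'I_S.+1) : 'I_S.+1 := inord (r z).
have rBv z : val (rB z) = r z by apply: inordK; rewrite ltnS rS // -ltnS ltn_ord.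
set VT := VS S f setT; set VM := VS S f M; set VN := VS S f N.
set t := #|rB @: (VN :&: VM)|.
have eVT : #|VT| = #|VM| + #|VN :\: VM|.
  rewrite -card_UD; apply: eq_card => z; rewrite !inE.
  apply/existsP/orP => [[i /andP[_ zi]]|[|] /existsP [i /andP[iA zi]]];
    last 2 first.
  - by exists i; rewrite in_setT.
  - by exists i; rewrite in_setT.
  case: (boolP (i \in M)) => iM; [left|right]; apply/existsP; exists i; rewrite ?iM //.
  by rewrite /N inE iM.
have eVg : #|VS S g N| = #|VN :\: VM| + t.
  have -> : VS S g N = (VN :\: VM) :|: rB @: (VN :&: VM).
    apply/setP => z; rewrite !inE; apply/existsP/idP.
    - case=> i /andP [iN /mapP [x xi zx]].
      have xS : x <= S := Hb _ _ xi.
      have ivx : val (inord x : 'I_S.+1) = x by apply: inordK; rewrite ltnS.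
      case: (boolP (inV f M x)) => xV.
      + apply/orP; right; apply/imsetP; exists (inord x).
          rewrite !inE ivx; apply/andP; split => //.
          by apply/existsP; exists i; rewrite iN.
        by apply: val_inj; rewrite rBv ivx.
      + rewrite R1 // in zx; rewrite zx xV /=; apply/orP; left; apply/existsP; exists i.
        by rewrite iN.
    - case/orP => [/andP[zM /existsP [i /andP[iN zi]]]|/imsetP [w]].
        exists i; rewrite iN /=; rewrite /g -(R1 (val z)) ?map_f //.
      rewrite !inE => /andP[/existsP [i /andP[iN wi]] _] ->.
      by exists i; rewrite iN /= rBv /g map_f.
  apply: card_disjU; apply/setP => z; rewrite !inE; apply/negbTE.
  apply/negP => /andP[/andP[zM _] /imsetP [w]]; rewrite !inE => /andP[_ wM] zE.
  by move/negP: zM; apply; rewrite zE rBv; exact: R2.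
have eN : #|[set: I]| = #|M| + #|N| by rewrite cardsT -(cardsC M).
have eSum : \sum_(i in [set: I]) size (f i) =
            \sum_(i in M) size (f i) + \sum_(i in N) size (f i).
  rewrite (big_setID M) /=; congr (_ + _); apply: eq_bigl => i; rewrite !inE /=; [by [] | by rewrite andbT].
have eSg : \sum_(i in N) size (g i) = \sum_(i in N) size (f i).
  by apply: eq_bigr => i _; rewrite /g size_map.
pose croot := fingraph.root (adjF f).
have crootE x y : (croot x == croot y) = connect (adjF f) x y.
  by rewrite root_connect //; apply: adjF_csym.
have cT : n_comp (adjR f setT) setT = #|croot @: setT|.
  apply: n_comp_label; first exact: adjR_csym.
    by move=> x y; rewrite !in_setT.
  move=> x y _ _; rewrite crootE; apply: eq_connect => u v.
  by rewrite /adjR !in_setT.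
have cN : n_comp (adjR g N) N = #|croot @: N|.
  apply: n_comp_label; first exact: adjR_csym.
    exact: adjR_in.
  by move=> x y xN yN; rewrite crootE (key1 R1 R2 R3).
have cT2 : #|croot @: setT| = #|croot @: N| + #|croot @: M :\: croot @: N|.
  rewrite -card_UD -imsetU; apply: eq_card => u.
  have -> : N :|: M = setT by apply/setP => i; rewrite !inE orNb.
  by [].
pose touch m := croot m \in croot @: N.
have TC m m' : connect (adjF f) m m' -> touch m = touch m'.
  by move=> c; rewrite /touch /croot (fingraph.rootP (@adjF_csym _ f) c).
have F1 m : m \in M -> touch m -> head 0 (f m) \in f m.
  move=> mM /imsetP [s0 sN /eqP]; rewrite crootE => cms.
  case E: (f m) => [|x0 l] /=; last by rewrite mem_head.
  by move: sN; rewrite (nil_no_connect E cms) inE mM.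
have F2 m : m \in M -> touch m ->
    exists m', exists y, [/\ connect (adjR f M) m m', y \in f m' & inV f N y].
  move=> mM tm.
  case: (boolP [exists m', connect (adjR f M) m m' && has (inV f N) (f m')]).
    by case/existsP => m' /andP[c /hasP [y yf yN]]; exists m', y.
  move=> nex; exfalso.
  case/imsetP: tm => s0 sN /eqP; rewrite crootE => cms.
  pose C := [set j | connect (adjR f M) m j].
  have : s0 \in C.
    move/connect_closedP: cms; apply; last by rewrite inE connect0.
    move=> u v; rewrite inE => cu /adjFP [x [xu xv]].
    have uM : u \in M := adjR_in mM cu.
    case: (boolP (v \in M)) => vM.
      rewrite inE (connect_trans cu) // connect1 // /adjR uM vM.
      by apply/adjFP; exists x.
    move/negP: nex; case; apply/existsP; exists u; rewrite cu /=; apply/hasP; exists x => //.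
    by apply/existsP; exists v; rewrite inE vM xv.
  rewrite inE => /(adjR_in mM) sM; by move: sN; rewrite /N inE sM.
have xS m : head 0 (f m) \in f m -> head 0 (f m) <= S by move/Hb.
have inrE (a b : 'I_S.+1) : (inr a == inr b :> (I + 'I_S.+1)%type) = (a == b) by [].
have inlE (a b : I) : (inl a == inl b :> (I + 'I_S.+1)%type) = (a == b) by [].
pose lam m : (I + 'I_S.+1)%type :=
  if touch m then inr (inord (r (head 0 (f m)))) else inl (croot m).
have cM : n_comp (adjR f M) M = #|lam @: M|.
  apply: n_comp_label; first exact: adjR_csym.
    exact: adjR_in.
  move=> x y xM yM; rewrite /lam.
  have TCM : connect (adjR f M) x y -> touch x = touch y by move/connect_RF; apply: TC.
  case tx: (touch x); case ty: (touch y).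
  - have hx := F1 _ xM tx; have hy := F1 _ yM ty.
    rewrite inrE inord_eq ?rS ?(xS _ hx) ?(xS _ hy) // R3 ?(inVI _ _ _ xM hx) ?(inVI _ _ _ yM hy) //.
    apply/idP/idP.
      case/existsP => i /existsP [j] /and5P [iM jM xi yj cij].
      apply: connect_trans (connect1 _) (connect_trans cij (connect1 _)).
        by rewrite /adjR xM iM; apply/adjFP; exists (head 0 (f x)); split.
      by rewrite /adjR jM yM; apply/adjFP; exists (head 0 (f y)); split.
    by move=> c; apply/existsP; exists x; apply/existsP; exists y; rewrite xM yM hx hy c.
  - by apply/esym/negbTE/negP => /TCM; rewrite tx ty.
  - by apply/esym/negbTE/negP => /TCM; rewrite tx ty.
  - rewrite inlE crootE; apply/idP/idP; last exact: connect_RF.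
    move=> c; apply: (@connect_mono _ _ [set j | connect (adjF f) x j]).
      apply/subsetP => j; rewrite inE => cj; case: (boolP (j \in M)) => // jN.
      move: tx; rewrite /touch; suff -> : croot x \in croot @: N by [].
      apply/imsetP; exists j; first by rewrite inE.
      by apply/eqP; rewrite crootE.
    apply: connect_restrict => //; last by rewrite inE connect0.
    move=> u v; rewrite !inE => cu uv; exact: connect_trans cu (connect1 uv).
set M1 := [set m in M | ~~ touch m]; set M2 := [set m in M | touch m].
have eM : M = M1 :|: M2.
  by apply/setP => m; rewrite !inE; case: (m \in M); case: (touch m).
have cM2 : #|lam @: M| = #|croot @: M :\: croot @: N| + t.
  rewrite eM imsetU card_disjU; last first.
    apply/setP => z; rewrite !inE; apply/negbTE/negP.
    case/andP => /imsetP [m1 m1M ->] /imsetP [m2 m2M].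
    move: m1M m2M; rewrite !inE /lam => /andP[_ /negbTE ->] /andP[_ ->] //.
  congr (_ + _).
  - have -> : lam @: M1 = inl @: (croot @: M1).
      rewrite -imset_comp; apply: eq_in_imset => m; rewrite inE /lam => /andP[_ /negbTE ->].
      by [].
    rewrite card_imset; last by move=> a b [].
    apply: eq_card => u; rewrite !inE; apply/imsetP/andP => [[m]|[nt /imsetP [m mM um]]].
      rewrite inE => /andP [mM ntm] ->; split; first exact: ntm.
      by apply: imset_f; rewrite -eM.
    rewrite -eM in mM; by exists m; rewrite // inE mM /touch -um.
  - have -> : lam @: M2 = inr @: (rB @: (VN :&: VM)).
      apply/setP => z; apply/imsetP/imsetP.
      + case=> m; rewrite inE => /andP[mM tm] ->.
        have [m' [y [c ym' yN]]] := F2 m mM tm.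
        have yS : y <= S := Hb _ _ ym'.
        have ivy : val (inord y : 'I_S.+1) = y by apply: inordK; rewrite ltnS.
        have hm := F1 _ mM tm.
        exists (rB (inord y)).
          apply/imsetP; exists (inord y) => //; rewrite !inE; apply/andP; split.
            by rewrite ivy; exact: yN.
          by apply/existsP; exists m'; rewrite ivy ym' (adjR_in mM c).
        rewrite /lam tm; congr inr; apply: val_inj; rewrite /= rBv ivy.
        have -> : val (inord (r (head 0 (f m))) : 'I_S.+1) = r (head 0 (f m)).
          by apply: inordK; rewrite ltnS rS // xS.
        apply/eqP; rewrite R3 ?(inVI _ _ _ mM hm) ?(inVI _ _ _ (adjR_in mM c) ym') //.
        by apply/existsP; exists m; apply/existsP; exists m'; rewrite mM hm ym' c (adjR_in mM c).
      + case=> w /imsetP [w' w'in ->] ->.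
        move: w'in; rewrite !inE => /andP [/existsP [s0 /andP [sN ws]] /existsP [m /andP [mM wm]]].
        have tm : touch m.
          apply/imsetP; exists s0 => //; apply/eqP; rewrite crootE connect1 //.
          by apply/adjFP; exists (val w').
        have hm := F1 _ mM tm.
        exists m; first by rewrite inE mM tm.
        rewrite /lam tm; congr inr; apply: val_inj; rewrite /= rBv.
        have -> : val (inord (r (head 0 (f m))) : 'I_S.+1) = r (head 0 (f m)).
          by apply: inordK; rewrite ltnS rS // xS.
        apply/eqP; rewrite R3 ?(inVI _ _ _ mM hm) ?(inVI _ _ _ mM wm) //.
        by apply/existsP; exists m; apply/existsP; exists m; rewrite mM hm wm connect0.
    by rewrite card_imset //; move=> a b [].
rewrite /chiS cN cT cM cT2 cM2 eVg -/VT -/VM eVT eN eSum eSg.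
lia.
Qed.

Lemma Posz_sum (J : finType) (P : pred J) (F : J -> nat) :
  Posz (\sum_(j | P j) F j)%N = (\sum_(j | P j) Posz (F j))%R.
Proof. by apply: (big_morph Posz PoszD). Qed.

Lemma sum_comp (I : finType) (f : I -> seq nat) (F : I -> nat) :
  (\sum_(r | r \in fingraph.roots (adjF f)) \sum_(i in [set i | connect (adjF f) r i]) F i)%N
  = (\sum_(i in [set: I]) F i)%N.
Proof.
have sym := @adjF_csym _ f.
rewrite [in RHS](eq_bigl predT); last by move=> i; rewrite in_setT.
rewrite [in RHS](partition_big (fingraph.root (adjF f)) (fun r => r \in fingraph.roots (adjF f))) //;
  last by move=> i _; apply: roots_root.
apply: eq_bigr => r rr; apply: eq_bigl => i.
rewrite inE /=; apply/idP/eqP => [c|<-]; last by rewrite sym connect_root.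
by rewrite -(fingraph.rootP sym c) (eqP rr).
Qed.

Lemma card_sum (T : finType) (A : {set T}) : #|A| = (\sum_x (x \in A : nat))%N.
Proof. by rewrite -sum1_card big_mkcond /=; apply: eq_bigr => x _; case: (x \in A). Qed.

Lemma core_comp S (I : finType) (f : I -> seq nat) :
  chiS S f setT =
  (\sum_(r | r \in fingraph.roots (adjF f)) chiS S f [set i | connect (adjF f) r i])%R.
Proof.
have sym := @adjF_csym _ f.
set C := fun r => [set i | connect (adjF f) r i].
have Ccl r u v : u \in C r -> adjF f u v -> v \in C r.
  by rewrite !inE => cu uv; exact: connect_trans cu (connect1 uv).
have nC r : n_comp (adjR f (C r)) (C r) = 1%N.
  rewrite (@n_comp_label _ _ _ _ (fun _ => tt)).
  - have : #|[set tt | _ in C r]| <= #|{: unit}| by apply: max_card.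
    have : 0 < #|[set tt | _ in C r]|.
      by rewrite card_gt0; apply/set0Pn; exists tt; apply/imsetP; exists r; rewrite ?inE.
    rewrite card_unit; lia.
  - exact: adjR_csym.
  - exact: adjR_in.
  - move=> x y; rewrite !inE => rx ry; apply/esym.
    apply: connect_restrict; first exact: Ccl.
      by rewrite inE.
    by apply: connect_trans ry; rewrite sym.
have nT : n_comp (adjR f setT) setT = (\sum_(r | r \in fingraph.roots (adjF f)) 1)%N.
  rewrite sum1_card (@eq_n_comp _ _ (adjF f)); last first.
    by apply: eq_connect => u v; rewrite /adjR !in_setT.
  by apply: eq_card => x; rewrite !inE andbT.
have eV : (\sum_(r | r \in fingraph.roots (adjF f)) #|VS S f (C r)|)%N = #|VS S f setT|.
  rewrite card_sum (eq_bigr (fun r => \sum_x (x \in VS S f (C r) : nat))%N);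
    last by move=> r _; rewrite card_sum.
  rewrite exchange_big /=; apply: eq_bigr => x _.
  case: (boolP (x \in VS S f setT)) => xT.
  - move: (xT); rewrite inE => /existsP [i /andP[_ xi]].
    rewrite (bigD1 (fingraph.root (adjF f) i)) /=; last exact: roots_root.
    rewrite big1 ?addn0.
      have -> : x \in VS S f (C (fingraph.root (adjF f) i)) by
        rewrite inE; apply/existsP; exists i; rewrite inE xi andbT sym connect_root.
      by [].
    move=> r /andP[rr rne]; apply/eqP; rewrite eqb0; apply/negP.
    rewrite inE => /existsP [j /andP[]]; rewrite inE => crj xj; move/negP: rne; apply.
    rewrite -(eqP rr); apply/eqP/fingraph.rootP => //.
    apply: connect_trans crj (connect1 _); apply/adjFP; exists (val x); split => //.
  - rewrite big1 //= => r _; apply/eqP; rewrite eqb0; apply/negP.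
    rewrite inE => /existsP [j /andP[_ xj]]; move/negP: xT; apply; rewrite inE; apply/existsP; exists j.
    by rewrite in_setT.
have eA : (\sum_(r | r \in fingraph.roots (adjF f)) #|C r|)%N = #|[set: I]|.
  rewrite -sum1_card -(sum_comp f); apply: eq_bigr => r _; by rewrite sum1_card.
have eS := sum_comp f (fun i => size (f i)).
rewrite /chiS (eq_bigr (fun r => (Posz (#|VS S f (C r)| + #|C r|) -
   Posz (\sum_(i in C r) size (f i) + 1))%R)); last by move=> r _; rewrite nC.
rewrite sumrB -!Posz_sum !big_split /= eV eA eS -nT.
by [].
Qed.

Lemma atom_bound (q : query) (i : 'I_(size q)) x :
  x \in atom_at q i -> x <= sumn (flatten q).
Proof.
move=> xi; apply: leq_sumn_mem; apply/flattenP; exists (atom_at q i) => //.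
by rewrite /atom_at mem_nth.
Qed.

Lemma map_atom_enum (q : query) : map (atom_at q) (enum 'I_(size q)) = q.
Proof.
rewrite -[RHS](mkseq_nth [::] q) /mkseq -val_enum_ord -map_comp.
by apply: eq_map.
Qed.

Lemma chi_full (q : query) : chi q = chiS (sumn (flatten q)) (atom_at q) setT.
Proof.
have [h _ _] := @bridge (sumn (flatten q)) _ (atom_at q) (enum 'I_(size q)) (enum_uniq _)
  (fun i x _ xi => atom_bound xi).
rewrite map_atom_enum in h; rewrite h; congr chiS.
by apply/setP => i; rewrite !inE mem_enum.
Qed.

Lemma sub_set (q : query) (M : {set 'I_(size q)}) :
  [set i | i \in [seq i <- enum 'I_(size q) | i \in M]] = M.
Proof. by apply/setP => i; rewrite inE mem_filter mem_enum andbT. Qed.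

Lemma chi_sub (q : query) (M : {set 'I_(size q)}) :
  chi (subquery q M) = chiS (sumn (flatten q)) (atom_at q) M.
Proof.
have [h _ _] := @bridge (sumn (flatten q)) _ (atom_at q) [seq i <- enum 'I_(size q) | i \in M]
  (filter_uniq _ (enum_uniq _)) (fun i x _ xi => atom_bound xi).
by rewrite sub_set in h; rewrite -h.
Qed.

Lemma chi_contract (q : query) (M : {set 'I_(size q)}) :
  chi (contract q M) = (chi q - chi (subquery q M))%R.
Proof.
set S := sumn (flatten q); set f := atom_at q.
have [R1 R2 R3] := @rep_props S _ f [seq i <- enum 'I_(size q) | i \in M]
  (filter_uniq _ (enum_uniq _)) (fun i x _ xi => atom_bound xi).
rewrite sub_set in R1 R2 R3.
set r := rep _ in R1 R2 R3.
have rS x : x <= S -> r x <= S.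
  move=> xS; case: (boolP (inV f M x)) => xV; last by rewrite R1.
  by case: (R2 _ xV) => /existsP [i /andP[_ H]] _; exact: atom_bound H.
have gb : forall i x, i \in [seq i <- enum 'I_(size q) | i \notin M] ->
    x \in map r (f i) -> x <= S.
  by move=> i x _ /mapP [y yi ->]; apply: rS; apply: atom_bound yi.
have [h _ _] := @bridge S _ (fun i => map r (f i)) [seq i <- enum 'I_(size q) | i \notin M]
  (filter_uniq _ (enum_uniq _)) gb.
have eN : [set i | i \in [seq i <- enum 'I_(size q) | i \notin M]] = ~: M.
  by apply/setP => i; rewrite !inE mem_filter mem_enum andbT.
rewrite eN in h.
rewrite /contract h (core_contract (S := S)) //.
- by rewrite chi_full chi_sub.
- by move=> i x /atom_bound.
- by move=> x /R2 [].
Qed.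

Lemma chiS_single S (I : finType) (f : I -> seq nat) (i0 : I) :
  (forall x, x \in f i0 -> x <= S) -> (chiS S f [set i0] <= 0)%R.
Proof.
move=> Hb; rewrite /chiS cards1 big_set1.
have -> : n_comp (adjR f [set i0]) [set i0] = 1%N.
  rewrite (@n_comp_label _ _ _ _ (fun _ => tt)).
  - by rewrite imset_set1 cards1.
  - exact: adjR_csym.
  - exact: adjR_in.
  - by move=> x y /set1P -> /set1P ->; rewrite connect0.
have : #|VS S f [set i0]| <= size (f i0).
  have -> : VS S f [set i0] = [set x : 'I_S.+1 | val x \in f i0].
    apply/setP => z; rewrite !inE; apply/existsP/idP => [[i /andP[/set1P -> //]]|zi].
    by exists i0; rewrite inE eqxx.
  rewrite (@card_vals S) //; exact: size_undup.
lia.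
Qed.

Lemma size_contract (q : query) (M : {set 'I_(size q)}) : size (contract q M) = #|~: M|.
Proof.
rewrite /contract size_map -(card_uniqP (filter_uniq _ (enum_uniq _))).
by apply: eq_card => i; rewrite !inE mem_filter mem_enum andbT.
Qed.

Lemma chi_le0 (q : query) : (chi q <= 0)%R.
Proof.
have [n] := ubnP (size q); elim: n q => [q //|n IH q hq].
case: (posnP (size q)) => [/size0nil -> | qpos].
  rewrite /chi /nvars /qvars /sum_arity /=; set c := ncomp _; lia.
pose i0 : 'I_(size q) := Ordinal qpos.
have h1 := chi_contract [set i0].
have h2 : (chi (subquery q [set i0]) <= 0)%R.
  by rewrite chi_sub; apply: chiS_single => x /atom_bound.
have h3 : (chi (contract q [set i0]) <= 0)%R.
  apply: IH; rewrite size_contract cardsC1 card_ord; lia.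
lia.
Qed.


Unset Implicit Arguments.
Local Open Scope ring_scope.

Theorem lemma1 (q : query) :
  [/\ chi q = \sum_(r : 'I_(size q) | r \in roots (atom_adj q)) chi (component q r),
      (forall M : {set 'I_(size q)}, chi (contract q M) = chi q - chi (subquery q M)),
      chi q <= 0
    & (forall M : {set 'I_(size q)}, chi q <= chi (contract q M))].
Proof.
split.
- rewrite chi_full core_comp; apply: eq_bigr => r _; by rewrite /component chi_sub.
- exact: chi_contract.
- exact: chi_le0.
- move=> M; rewrite chi_contract; have := chi_le0 (subquery q M); lia.
Qed.
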